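(* For every $f:\mathbb{Z}\to\mathbb{R}$ such that $\widetilde{M}f$ is not identically $+\infty$, $$\|(\widetilde{M}f)'\|_{\infty}\leq \frac{1}{2}\|f'\|_{\infty}.$$ Moreover, equality is attained when $f$ is a delta function (e.g. $f=\mathbf{1}_{\{0\}}$).
   Context: For $f:\mathbb{Z}\to\mathbb{R}$, the uncentered discrete Hardy–Littlewood maximal function is $\widetilde{M}f(n)=\sup_{r,s\in\mathbb{Z}_{\ge 0}}\frac{1}{r+s+1}\sum_{k=-s}^{r}|f(n+k)|$ (possibly $+\infty$). For $g:\mathbb{Z}\to\mathbb{R}$, $g'(n)=g(n+1)-g(n)$ and $\|g\|_\infty=\sup_{n\in\mathbb{Z}}|g(n)|$. *)

(* Defs.v *)
From mathcomp Require Import all_boot all_order all_algebra.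
From mathcomp Require Import all_classical all_reals ereal.
Set Implicit Arguments. Unset Strict Implicit. Unset Printing Implicit Defensive.
Import Order.TTheory GRing.Theory Num.Theory.
Local Open Scope ring_scope.

Definition avg {R : realType} (f : int -> R) (n : int) (r s : nat) : R :=
  (\sum_(i < r + s + 1) `|f (n - s%:Z + i%:Z)|) / (r + s + 1)%:R.

Definition Mt {R : realType} (f : int -> R) (n : int) : \bar R :=
  ereal_sup [set (avg f n p.1 p.2)%:E | p in [set: nat * nat]].

Definition dder {R : realType} (g : int -> R) (n : int) : R := g (n + 1) - g n.

Definition supnorm {R : realType} (g : int -> R) : \bar R :=
  ereal_sup [set `|g n|%:E | n in [set: int]].

(* real-valued version of Mt (meaningful when Mt f is finite everywhere) *)
Definition Mtr {R : realType} (f : int -> R) (n : int) : R := fine (Mt f n).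

Definition delta {R : realType} (a : int) (c : R) (n : int) : R :=
  if n == a then c else 0.

(* Main.v *)
Require Import Defs.
From mathcomp Require Import all_boot all_order all_algebra.
From mathcomp Require Import all_classical all_reals ereal.
From mathcomp Require Import zify ring lra.
Import Order.TTheory GRing.Theory Num.Theory.
Local Open Scope ring_scope.

Section S.
Variable R : realType.
Implicit Types f : int -> R.

Lemma gauss_up (N : nat) : (\sum_(i < N) (i.+1)%:R) * 2 = (N * N.+1)%:R :> R.
Proof.
elim: N => [|N IH]; first by rewrite big_ord0 mul0r.
rewrite big_ord_recr /= mulrDl IH -natrM -natrD; congr (_%:R); lia.
Qed.

Lemma gauss_down (N : nat) : (\sum_(i < N) (N - i)%:R) * 2 = (N * N.+1)%:R :> R.
Proof.
elim: N => [|N IH]; first by rewrite big_ord0 mul0r.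
rewrite big_ord_recl /= subn0.
under eq_bigr => i _ do rewrite /bump /= add1n subSS.
rewrite mulrDl IH -natrM -natrD; congr (_%:R); lia.
Qed.

Lemma lip f (L : R) : (forall k, `|f (k + 1) - f k| <= L) ->
  forall k (j : nat), `|f (k + j%:Z) - f k| <= j%:R * L.
Proof.
move=> hL k; elim=> [|j IH]; first by rewrite addr0 subrr normr0 mul0r.
have -> : f (k + j.+1%:Z) - f k = (f ((k + j%:Z) + 1) - f (k + j%:Z)) + (f (k + j%:Z) - f k).
  have -> : k + j.+1%:Z = (k + j%:Z) + 1 by lia.
  ring.
rewrite -[j.+1]addn1 natrD mulrDl mul1r addrC.
by apply: (le_trans (ler_normD _ _)); apply: lerD.
Qed.

Lemma avg_ge0 f n r s : 0 <= avg f n r s.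
Proof. by rewrite /avg divr_ge0 // sumr_ge0. Qed.

Lemma Mt_ge0 f n : (0 <= Mt f n)%E.
Proof.
apply: le_trans (ereal_sup_ubound _); last by exists (0%N, 0%N).
by rewrite lee_fin avg_ge0.
Qed.


Lemma key_ineq (S x L a : R) : 0 < a -> S - a * x <= L * (a * (a + 1)) / 2 ->
  S / a <= (S + x) / (a + 1) + L / 2.
Proof.
move=> a0 h.
have e : S / a = (S + x) / (a + 1) + (S - a * x) / (a * (a + 1)).
  by field; apply/andP; split; lra.
rewrite e lerD2l ler_pdivrMr; last by apply: mulr_gt0; lra.
move: h; rewrite mulrAC => h; lra.
Qed.

Lemma key2 (S x a : R) : 1 <= a -> 0 <= S -> 0 <= x -> S / a <= 2 * ((S + x) / (a + 1)).
Proof.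
move=> a1 S0 x0.
rewrite ler_pdivrMr; last lra.
rewrite mulrA -mulrAC ler_pdivlMr; last lra.
have h1 : 0 <= S * (a - 1) by apply: mulr_ge0; lra.
have h2 : 0 <= x * a by apply: mulr_ge0; lra.
rewrite mulrBr mulr1 in h1.
rewrite mulrDr !mulrDl mul1r mulr1 [(S + x) * a]mulrDl. move: h1 h2; set Sa := S * a; set xa := x * a; lra.
Qed.

Lemma winA f n s : avg f (n + 1) 0 s.+1 =
  ((\sum_(i < s.+1) `|f (n - s%:Z + i%:Z)|) + `|f (n + 1)|) / (s.+1%:R + 1).
Proof.
rewrite /avg add0n addn1 big_ord_recr /=.
congr ((_ + `|f _|) / _); last (by rewrite natr1); last lia.
by apply: eq_bigr => i _; congr (`|f _|); lia.
Qed.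

Lemma winA0 f n s : avg f n 0 s =
  (\sum_(i < s.+1) `|f (n - s%:Z + i%:Z)|) / s.+1%:R.
Proof. by rewrite /avg add0n addn1. Qed.

Lemma winB f n r : avg f n r.+1 0 =
  ((\sum_(i < r.+1) `|f (n + 1 + i%:Z)|) + `|f n|) / (r.+1%:R + 1).
Proof.
rewrite /avg addn0 addn1 big_ord_recl /= addrC.
congr ((_ + `|f _|) / _); last (by rewrite natr1); last lia.
by apply: eq_bigr => i _; congr (`|f _|); rewrite /bump /=; lia.
Qed.

Lemma winB0 f n r : avg f (n + 1) r 0 =
  (\sum_(i < r.+1) `|f (n + 1 + i%:Z)|) / r.+1%:R.
Proof.
rewrite /avg addn0 addn1; congr (_ / _).
by apply: eq_bigr => i _; congr (`|f _|); lia.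
Qed.

Lemma winC f n r s : avg f n r.+1 s = avg f (n + 1) r s.+1.
Proof.
rewrite /avg addSnnS; congr (_ / _).
by apply: eq_bigr => i _; congr (`|f _|); lia.
Qed.

Lemma winD f n r s : avg f (n + 1) r s.+1 = avg f n r.+1 s.
Proof. by rewrite winC. Qed.


Lemma avgA f (L : R) : (forall k, `|f (k + 1) - f k| <= L) ->
  forall n s, avg f n 0 s <= avg f (n + 1) 0 s.+1 + L / 2.
Proof.
move=> hL n s; rewrite winA0 winA; apply: key_ineq; first by rewrite ltr0Sn.
set x := `|f (n + 1)|.
have h : \sum_(i < s.+1) (`|f (n - s%:Z + i%:Z)| - x) <= \sum_(i < s.+1) ((s.+1 - i)%:R * L).
  apply: ler_sum => i _.
  apply: le_trans (lerB_dist _ _) _; rewrite distrC /x.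
  have -> : n + 1 = n - s%:Z + i%:Z + (s.+1 - i)%:Z by have := ltn_ord i; lia.
  exact: lip.
rewrite sumrB sumr_const card_ord -mulr_natl -mulr_suml in h.
have g := gauss_down s.+1.
have -> : (s.+1%:R : R) * (s.+1%:R + 1) = (s.+1 * s.+2)%:R by rewrite natr1 natrM.
rewrite -g; move: h; set T := \sum_(i < s.+1) _; move=> h.
have -> : L * (T * 2) / 2 = T * L by field.
exact: h.
Qed.

Lemma avgB f (L : R) : (forall k, `|f (k + 1) - f k| <= L) ->
  forall n r, avg f (n + 1) r 0 <= avg f n r.+1 0 + L / 2.
Proof.
move=> hL n r; rewrite winB0 winB; apply: key_ineq; first by rewrite ltr0Sn.
set x := `|f n|.
have h : \sum_(i < r.+1) (`|f (n + 1 + i%:Z)| - x) <= \sum_(i < r.+1) ((i.+1)%:R * L).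
  apply: ler_sum => i _.
  apply: le_trans (lerB_dist _ _) _; rewrite /x.
  have -> : n + 1 + i%:Z = n + (i.+1)%:Z by lia.
  exact: lip.
rewrite sumrB sumr_const card_ord -mulr_natl -mulr_suml in h.
have g := gauss_up r.+1.
have -> : (r.+1%:R : R) * (r.+1%:R + 1) = (r.+1 * r.+2)%:R by rewrite natr1 natrM.
rewrite -g; move: h; set T := \sum_(i < r.+1) _; move=> h.
have -> : L * (T * 2) / 2 = T * L by field.
exact: h.
Qed.

Lemma avgA2 f n s : avg f n 0 s <= 2 * avg f (n + 1) 0 s.+1.
Proof.
rewrite winA0 winA; apply: key2; first by rewrite ler1n.
  by apply: sumr_ge0. by [].
Qed.

Lemma avgB2 f n r : avg f (n + 1) r 0 <= 2 * avg f n r.+1 0.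
Proof.
rewrite winB0 winB; apply: key2; first by rewrite ler1n.
  by apply: sumr_ge0. by [].
Qed.


Lemma L_ge0 {f} {L : R} : (forall k, `|f (k + 1) - f k| <= L) -> 0 <= L.
Proof. by move=> hL; apply: le_trans (hL 0). Qed.

Lemma Mt_le_next {f} {L : R} : (forall k, `|f (k + 1) - f k| <= L) ->
  forall n, (Mt f n <= Mt f (n + 1) + (L / 2)%:E)%E.
Proof.
move=> hL n; have L0 := (L_ge0 hL).
apply: ge_ereal_sup => _ [[r s] _ <-] /=.
case: r => [|r].
  apply: (@le_trans _ _ (avg f (n + 1) 0 s.+1 + L / 2)%:E).
    by rewrite lee_fin avgA.
  rewrite EFinD leeD2r //; apply: ereal_sup_ubound; by exists (0%N, s.+1).
rewrite winC; apply: lee_paddr; first by rewrite lee_fin divr_ge0.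
by apply: ereal_sup_ubound; exists (r, s.+1).
Qed.

Lemma Mt_le_prev {f} {L : R} : (forall k, `|f (k + 1) - f k| <= L) ->
  forall n, (Mt f (n + 1) <= Mt f n + (L / 2)%:E)%E.
Proof.
move=> hL n; have L0 := (L_ge0 hL).
apply: ge_ereal_sup => _ [[r s] _ <-] /=.
case: s => [|s].
  apply: (@le_trans _ _ (avg f n r.+1 0 + L / 2)%:E).
    by rewrite lee_fin avgB.
  rewrite EFinD leeD2r //; apply: ereal_sup_ubound; by exists (r.+1, 0%N).
rewrite winD; apply: lee_paddr; first by rewrite lee_fin divr_ge0.
by apply: ereal_sup_ubound; exists (r.+1, s).
Qed.

Lemma le2 (x y : R) (S : set (\bar R)) : x <= 2 * y -> S y%:E ->
  (x%:E <= 2%:E * ereal_sup S)%E.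
Proof.
move=> h Sy; apply: (@le_trans _ _ (2%:E * y%:E)%E).
  by rewrite -EFinM lee_fin.
by apply: lee_wpmul2l; [rewrite lee_fin | apply: ereal_sup_ubound].
Qed.

Lemma Mt2_next f n : (Mt f n <= 2%:E * Mt f (n + 1))%E.
Proof.
apply: ge_ereal_sup => _ [[r s] _ <-] /=.
case: r => [|r].
  by apply: le2; [apply: avgA2 | exists (0%N, s.+1)].
rewrite winC; apply: le2; last by exists (r, s.+1).
have := avg_ge0 f (n + 1) r s.+1; lra.
Qed.

Lemma Mt2_prev f n : (Mt f (n + 1) <= 2%:E * Mt f n)%E.
Proof.
apply: ge_ereal_sup => _ [[r s] _ <-] /=.
case: s => [|s].
  by apply: le2; [apply: avgB2 | exists (r.+1, 0%N)].
rewrite winD; apply: le2; last by exists (r.+1, s).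
have := avg_ge0 f n r.+1 s; lra.
Qed.

Lemma lt2 (x y : \bar R) : (x <= 2%:E * y)%E -> (0 <= y)%E -> (y < +oo)%E -> (x < +oo)%E.
Proof.
case: y => [r| |] //= h _ _.
by apply: le_lt_trans h _; rewrite -EFinM ltry.
Qed.

Lemma Mt_fin {f} : (exists n, Mt f n != +oo%E) -> forall n, Mt f n \is a fin_num.
Proof.
move=> [n0 h0] n.
rewrite ge0_fin_numE ?Mt_ge0 //.
have h0' : (Mt f n0 < +oo)%E by rewrite ltey.
have hp : forall k : nat, (Mt f (n0 + k%:Z) < +oo)%E.
  elim=> [|k IH]; first by rewrite addr0.
  have -> : n0 + k.+1%:Z = (n0 + k%:Z) + 1 by lia.
  exact: lt2 (Mt2_prev _ _) (Mt_ge0 _ _) IH.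
have hm : forall k : nat, (Mt f (n0 - k%:Z) < +oo)%E.
  elim=> [|k IH]; first by rewrite subr0.
  have e : n0 - k%:Z = (n0 - k.+1%:Z) + 1 by lia.
  rewrite e in IH.
  exact: lt2 (Mt2_next _ _) (Mt_ge0 _ _) IH.
have [k [->|->]] : exists k : nat, n = n0 + k%:Z \/ n = n0 - k%:Z.
  case: (lerP n0 n) => h.
    by exists `|n - n0|%N; left; lia.
  by exists `|n - n0|%N; right; lia.
  exact: hp.
exact: hm.
Qed.

Lemma supnorm_ge0 (g : int -> R) : (0 <= supnorm g)%E.
Proof.
apply: le_trans (ereal_sup_ubound _); last by exists 0.
by rewrite lee_fin.
Qed.

Lemma part1 f : (exists n, Mt f n != +oo%E) ->
     (forall n, Mt f n \is a fin_num) /\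
     (supnorm (dder (Mtr f)) <= (2^-1)%:E * supnorm (dder f))%E.
Proof.
move=> h; have fin := Mt_fin h; split => //.
have s0 := supnorm_ge0 (dder f).
case E: (supnorm (dder f)) s0 => [L| |] s0 //; last first.
  by rewrite gt0_muley ?leey // lte_fin invr_gt0.
have hL : forall k, `|f (k + 1) - f k| <= L.
  move=> k; have : (`|dder f k|%:E <= supnorm (dder f))%E.
    by apply: ereal_sup_ubound; exists k.
  by rewrite E lee_fin.
rewrite -EFinM; apply: ge_ereal_sup => _ [k _ <-].
rewrite lee_fin /dder /Mtr.
have a1 := Mt_le_next hL k; have a2 := Mt_le_prev hL k.
rewrite -(fineK (fin k)) -(fineK (fin (k + 1))) -EFinD lee_fin in a1.
rewrite -(fineK (fin k)) -(fineK (fin (k + 1))) -EFinD lee_fin in a2.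
by rewrite ler_norml; apply/andP; split; lra.
Qed.


Lemma avg_le_bound f (B : R) n r s : (forall k, `|f k| <= B) -> avg f n r s <= B.
Proof.
move=> hB; rewrite /avg addn1 ler_pdivrMr ?ltr0Sn //.
apply: le_trans (ler_sum _ (fun i _ => hB _)) _.
by rewrite sumr_const card_ord mulr_natr.
Qed.

Lemma Mt_le_bound f (B : R) n : (forall k, `|f k| <= B) -> (Mt f n <= B%:E)%E.
Proof.
move=> hB; apply: ge_ereal_sup => _ [[r s] _ <-] /=.
by rewrite lee_fin avg_le_bound.
Qed.

Lemma delta_bound a (c : R) k : `|delta a c k| <= `|c|.
Proof. by rewrite /delta; case: eqP; rewrite ?normr0. Qed.

Lemma Mt_delta_a a (c : R) : Mt (delta a c) a = `|c|%:E.
Proof.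
apply: le_anti; apply/andP; split; first by apply: Mt_le_bound => k; apply: delta_bound.
apply: (@le_trans _ _ (avg (delta a c) a 0 0)%:E); last first.
  by apply: ereal_sup_ubound; exists (0%N, 0%N).
by rewrite /avg big_ord1 /delta /= subr0 addr0 eqxx divr1.
Qed.

Lemma sum_delta a (c : R) N : forall m,
  \sum_(i < N) `|delta a c (m + i%:Z)| <= (if m <= a then `|c| else 0).
Proof.
elim: N => [|N IH] m; first by rewrite big_ord0; case: ifP.
rewrite big_ord_recl /=.
have e : \sum_(i < N) `|delta a c (m + (bump 0 i)%:Z)| = \sum_(i < N) `|delta a c ((m + 1) + i%:Z)|.
  by apply: eq_bigr => i _; congr (`|delta a c _|); rewrite /bump /=; lia.
rewrite e; have := IH (m + 1); rewrite /delta addr0.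
set T := \sum_(i < N) _.
case: (ltrgtP m a) => h.
- have -> : m + 1 <= a by lia.
  by rewrite normr0 add0r.
- have -> : (m + 1 <= a) = false by apply/negbTE; lia.
  by rewrite normr0 add0r.
- rewrite h.
  have -> : (a + 1 <= a) = false by apply/negbTE; lia.
  by move=> h2; lra.
Qed.

Lemma avg_delta_le a (c : R) n r s : (0 < r + s)%N -> avg (delta a c) n r s <= `|c| / 2.
Proof.
move=> rs; rewrite /avg addn1 ler_pdivrMr ?ltr0Sn //.
apply: le_trans (sum_delta _ _ _ _) _.
have h2 : (2 : R) <= (r + s).+1%:R by rewrite ler_nat; lia.
have c0 : 0 <= `|c| by [].
have h3 : 0 <= `|c| / 2 * ((r + s).+1%:R - 2) by apply: mulr_ge0; lra.
have : `|c| <= `|c| / 2 * (r + s).+1%:R.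
  move: h3; rewrite mulrBr; set N := (r + s).+1%:R; lra.
by case: ifP => _ //; lra.
Qed.

Lemma Mt_delta_a1 a (c : R) : (Mt (delta a c) (a + 1) <= (`|c| / 2)%:E)%E.
Proof.
apply: ge_ereal_sup => _ [[r s] _ <-] /=; rewrite lee_fin.
have c0 : 0 <= `|c| by [].
case: (posnP (r + s)) => rs; last exact: avg_delta_le.
have [-> ->] : r = 0%N /\ s = 0%N by lia.
rewrite /avg big_ord1 /delta /=.
have -> : (a + 1 - 0%:Z + 0%:Z == a) = false by apply/eqP; lia.
by rewrite normr0 mul0r; lra.
Qed.


Lemma dder_delta_bound a (c : R) k : `|dder (delta a c) k| <= `|c|.
Proof.
rewrite /dder /delta; case: eqP => h1; case: eqP => h2.
- exfalso; lia.
- by rewrite subr0.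
- by rewrite sub0r normrN.
- by rewrite subr0 normr0.
Qed.

End S.

Theorem theorem5p4 (R : realType) :
  (forall f : int -> R, (exists n, Mt f n != +oo%E) ->
     (forall n, Mt f n \is a fin_num) /\
     (supnorm (dder (Mtr f)) <= (2^-1)%:E * supnorm (dder f))%E) /\
  (forall (a : int) (c : R), c != 0 ->
     (forall n, Mt (delta a c) n \is a fin_num) /\
     supnorm (dder (Mtr (delta a c))) = ((2^-1)%:E * supnorm (dder (delta a c)))%E).
Proof.
split; first exact: part1.
move=> a c c0.
have ex : exists n, Mt (delta a c) n != +oo%E by exists a; rewrite Mt_delta_a.
have [fin le1] := @part1 R _ ex; split => //.
apply: le_anti; rewrite le1 /=.
have hs : (supnorm (dder (delta a c)) <= `|c|%:E)%E.
  by apply: ge_ereal_sup => _ [k _ <-]; rewrite lee_fin dder_delta_bound.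
apply: (@le_trans _ _ ((2^-1)%:E * `|c|%:E)%E).
  by apply: lee_wpmul2l => //; rewrite lee_fin invr_ge0.
apply: (@le_trans _ _ (`|dder (Mtr (delta a c)) a|%:E)%E); last first.
  by apply: ereal_sup_ubound; exists a.
rewrite -EFinM lee_fin /dder /Mtr Mt_delta_a /=.
have y0 := @Mt_ge0 R (delta a c) (a + 1).
have y1 := @Mt_delta_a1 R a c.
rewrite -(fineK (fin (a + 1))) lee_fin in y0 y1.
move: y0 y1; set y := fine _ => y0 y1.
rewrite ler_normr; apply/orP; right; rewrite lee_fin in y1; lra.
Qed.
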